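(* Consider the system on $\mathbb{R}^2$ $$\dot x=f(x)=\begin{bmatrix}-x_1^3+x_1^5x_2\\ -x_2^3-x_1^6\end{bmatrix}$$ and the quadratic candidate $V(x)=c_0x_1^2+c_1x_2^2+c_2x_1x_2$ with real coefficients $c_0,c_1,c_2$, with Lie derivative $\dot V(x)=\nabla V(x)\cdot f(x)$. Let $\mu>0$ and let $\{y_j\}_{j=1}^N\subset\mathbb{R}^2\setminus\{0\}$ be any finite set of sample points. Then there exist $c_0,c_1,c_2$ with $c_0\ne c_1$ such that $V$ satisfies both (a) $V(y_j)>0$ and $\dot V(y_j)<0$ for all $j=1,\dots,N$; and (b) $V(y_j)\ge \mu\min(|y_j|^{l_V},|y_j|^{k_V})$ and $\dot V(y_j)\le -\mu\min(|y_j|^{l_{\dot V}},|y_j|^{k_{\dot V}})$ for all $j=1,\dots,N$, where $l_V,k_V$ (resp. $l_{\dot V},k_{\dot V}$) denote the lowest and highest total degrees of the monomials with nonzero coefficient in $V$ (resp. $\dot V$), and $|\cdot|$ is the Euclidean norm.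
   Context: Total degree of the monomial $x_1^{a}x_2^{b}$ is $a+b$. Note that $\dot V(x)=(2c_0-2c_1)x_1^6x_2-c_2x_1^7+c_2x_1^5x_2^2-2c_0x_1^4-2c_1x_2^4-c_2x_1^3x_2-c_2x_1x_2^3$. *)

(* Defs.v *)
From HB Require Import structures.
From mathcomp Require Import all_boot all_order all_algebra.
From mathcomp Require Import mpoly.
From mathcomp Require Import Rstruct.
From Stdlib Require Import Reals.
Set Implicit Arguments.
Unset Strict Implicit.
Unset Printing Implicit Defensive.
Import Order.TTheory GRing.Theory Num.Theory.
Local Open Scope ring_scope.

Notation R := Reals.Rdefinitions.R.

(* The polynomial vector field f = (f1, f2) in the variables x1 = 'X_0, x2 = 'X_1. *)
Definition f1 : {mpoly R[2]} := - 'X_0 ^+ 3 + 'X_0 ^+ 5 * 'X_1.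
Definition f2 : {mpoly R[2]} := - 'X_1 ^+ 3 - 'X_0 ^+ 6.

Definition Vpoly (c0 c1 c2 : R) : {mpoly R[2]} :=
  c0 *: 'X_0 ^+ 2 + c1 *: 'X_1 ^+ 2 + c2 *: ('X_0 * 'X_1).

Definition lie_deriv (p : {mpoly R[2]}) : {mpoly R[2]} :=
  mderiv 0 p * f1 + mderiv 1 p * f2.

Definition highdeg (p : {mpoly R[2]}) : nat := (msize p).-1.

(* Lowest total degree of a monomial with nonzero coefficient
   (defaults to highdeg p, i.e. 0, for the zero polynomial). *)
Definition lowdeg (p : {mpoly R[2]}) : nat :=
  foldr minn (highdeg p) [seq mdeg m | m <- msupp p].

Definition enorm (y : 'I_2 -> R) : R := Num.sqrt (y 0 ^+ 2 + y 1 ^+ 2).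

(* Main.v *)
Require Import Defs.
From HB Require Import structures.
From mathcomp Require Import all_boot all_order all_algebra.
From mathcomp Require Import mpoly.
From mathcomp Require Import Rstruct.
From mathcomp Require Import ring lra.
Import Order.TTheory GRing.Theory Num.Theory.
Local Open Scope ring_scope.

Lemma dX (i j : 'I_2) : mderiv i ('X_j : {mpoly R[2]}) = (i == j)%:R.
Proof.
rewrite mderivX mnm1E.
case: (eqVneq j i) => [->|ne]; rewrite ?eqxx /=.
  have ->: (U_(i) - U_(i))%MM = 0%MM by apply/mnmP=> k; rewrite !mnmE subnn.
  by rewrite mpolyX0 scale1r.
by rewrite scale0r.
Qed.

Lemma Vdot_eq (c0 c1 : R) : lie_deriv (Vpoly c0 c1 0) =
  (2 * (c0 - c1))%:MP * ('X_0 ^+ 6 * 'X_1) - (2 * c0)%:MP * 'X_0 ^+ 4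
  - (2 * c1)%:MP * 'X_1 ^+ 4.
Proof.
rewrite /lie_deriv /Vpoly /f1 /f2 -!mul_mpolyC !mderivD !mderiv_mulC !expr2 !mderivM !dX /=.
rewrite mpolyC0 !(mpolyCM, mpolyCB) mpolyC_nat.
ring.
Qed.

Lemma foldr_minn_le (d x : nat) (s : seq nat) : x \in s -> (foldr minn d s <= x)%N.
Proof.
elim: s => //= a s IH; rewrite in_cons => /orP [/eqP ->|/IH h].
  exact: geq_minl.
by rewrite geq_min h orbT.
Qed.

Lemma deg_bounds (p : {mpoly R[2]}) m : p@_m != 0 ->
  (lowdeg p <= mdeg m <= highdeg p)%N.
Proof.
rewrite -mcoeff_msupp => hm; apply/andP; split.
  by apply: foldr_minn_le; apply: map_f.
by rewrite /highdeg -ltnS prednK ?msize_mdeg_lt // (leq_ltn_trans _ (msize_mdeg_lt hm)).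
Qed.

Lemma min_pow_le (a : R) l m k : 0 < a -> (l <= m <= k)%N ->
  Num.min (a ^+ l) (a ^+ k) <= a ^+ m.
Proof.
move=> a0 /andP [lm mk].
case: (lerP a 1) => a1.
  by rewrite ge_min; apply/orP; right; apply: ler_wiXn2l => //; rewrite ltW.
by rewrite ge_min; apply/orP; left; apply: ler_weXn2l => //; rewrite ltW.
Qed.

Lemma V_coef (c0 c1 : R) :
  (Vpoly c0 c1 0)@_((U_((0:'I_2)%R) *+ 2)%MM) = c0.
Proof.
rewrite /Vpoly !mcoeffD !mcoeffZ !mpolyXn mcoeffX eqxx mcoeffX.
have ->: ((U_((1:'I_2)%R) *+ 2)%MM == (U_((0:'I_2)%R) *+ 2)%MM) = false.
  by apply/eqP => /mnmP/(_ ord0); rewrite !mnmE.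
by rewrite /= mul0r mulr1 mulr0 !addr0.
Qed.

Lemma Vdot_coef (c0 c1 : R) :
  (lie_deriv (Vpoly c0 c1 0))@_((U_((0:'I_2)%R) *+ 4)%MM) = - (2 * c0).
Proof.
rewrite Vdot_eq !mcoeffB !mcoeffCM !mpolyXn -mpolyXD !mcoeffX eqxx.
have ->: ((U_((1:'I_2)%R) *+ 4)%MM == (U_((0:'I_2)%R) *+ 4)%MM) = false.
  by apply/eqP => /mnmP/(_ ord0); rewrite !mnmE.
have ->: ((U_((0:'I_2)%R) *+ 6 + U_((1:'I_2)%R))%MM == (U_((0:'I_2)%R) *+ 4)%MM) = false.
  by apply/eqP => /mnmP/(_ ord0); rewrite !mnmE.
rewrite /=; lra.
Qed.

Lemma mdeg2 : mdeg ((U_((0:'I_2)%R) *+ 2)%MM) = 2%N.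
Proof. by rewrite mdegMn mdeg1. Qed.
Lemma mdeg4 : mdeg ((U_((0:'I_2)%R) *+ 4)%MM) = 4%N.
Proof. by rewrite mdegMn mdeg1. Qed.

Lemma mevalXn' (v : 'I_2 -> R) (p : {mpoly R[2]}) k : (p ^+ k).@[v] = p.@[v] ^+ k.
Proof. elim: k => [|k IH]; first by rewrite !expr0 meval1. by rewrite !exprS mevalM IH. Qed.

Lemma V_eval (c0 c1 : R) v : (Vpoly c0 c1 0).@[v] = c0 * v 0%R ^+ 2 + c1 * v 1%R ^+ 2.
Proof.
rewrite /Vpoly !mevalD !mevalZ !mevalXn' !mevalXU mul0r addr0. exact: erefl.
Qed.

Lemma Vdot_eval (c0 c1 : R) v : (lie_deriv (Vpoly c0 c1 0)).@[v] =
  2 * (c0 - c1) * (v 0%R ^+ 6 * v 1%R) - 2 * c0 * v 0%R ^+ 4 - 2 * c1 * v 1%R ^+ 4.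
Proof.
rewrite Vdot_eq !mevalB !mevalM !mevalC !mevalXU; ring.
Qed.

Lemma sum_ge_term N (F : 'I_N -> R) j : (forall i, 0 <= F i) -> F j <= \sum_i F i.
Proof.
move=> h; rewrite (bigD1 j) //= lerDl; apply: sumr_ge0 => i _; exact: h.
Qed.

Lemma nz_pos (v : 'I_2 -> R) : v <> (fun _ => 0) -> 0 < v 0%R ^+ 2 + v 1%R ^+ 2.
Proof.
move=> hv; rewrite lt_def; apply/andP; split; last by rewrite addr_ge0 // sqr_ge0.
apply/negP => /eqP h0; apply: hv; apply: FunctionalExtensionality.functional_extensionality => i.
have g0 := sqr_ge0 (v 0%R); have g1 := sqr_ge0 (v 1%R).
have h1 : v 0%R ^+ 2 = 0 by move/eqP: h0 => h0; lra.
have h2 : v 1%R ^+ 2 = 0 by move/eqP: h0 => h0; lra.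
case: i => [[|[|k]] Hk].
- by apply/eqP; rewrite -sqrf_eq0; apply/eqP; rewrite -h1; congr (v _ ^+ 2); apply: val_inj.
- by apply/eqP; rewrite -sqrf_eq0; apply/eqP; rewrite -h2; congr (v _ ^+ 2); apply: val_inj.
- by [].
Qed.

Theorem claim1 (mu : R) (N : nat) (y : 'I_N -> 'I_2 -> R) :
  0 < mu ->
  (forall j, y j <> (fun _ => 0)) ->
  exists c0 c1 c2 : R,
    c0 != c1 /\
    (forall j, 0 < (Vpoly c0 c1 c2).@[y j] /\
               (lie_deriv (Vpoly c0 c1 c2)).@[y j] < 0) /\
    (forall j,
       mu * Num.min (enorm (y j) ^+ lowdeg (Vpoly c0 c1 c2))
                    (enorm (y j) ^+ highdeg (Vpoly c0 c1 c2))
         <= (Vpoly c0 c1 c2).@[y j] /\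
       (lie_deriv (Vpoly c0 c1 c2)).@[y j]
         <= - (mu * Num.min (enorm (y j) ^+ lowdeg (lie_deriv (Vpoly c0 c1 c2)))
                            (enorm (y j) ^+ highdeg (lie_deriv (Vpoly c0 c1 c2))))).
Proof.
move=> mu0 hy.
pose S : R := 1 + \sum_i (y i 0%R ^+ 2 * (1 + y i 1%R ^+ 2)).
have S1 : 1 <= S.
  by rewrite /S lerDl; apply: sumr_ge0 => i _; apply: mulr_ge0; [exact: sqr_ge0|rewrite addr_ge0 // sqr_ge0].
have S0 : 0 < S by apply: lt_le_trans S1; exact: ltr01.
pose eps : R := mu / (2 * S).
have eps0 : 0 < eps by rewrite /eps divr_gt0 // mulr_gt0.
pose c0 := 2 * mu + eps; pose c1 := 2 * mu.
have c00 : c0 != 0 by rewrite /c0 gt_eqF // addr_gt0 // mulr_gt0.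
have dV : (lowdeg (Vpoly c0 c1 0%R) <= 2 <= highdeg (Vpoly c0 c1 0%R))%N.
  by rewrite -mdeg2; apply: deg_bounds; rewrite V_coef.
have dVd : (lowdeg (lie_deriv (Vpoly c0 c1 0%R)) <= 4 <= highdeg (lie_deriv (Vpoly c0 c1 0%R)))%N.
  have c0p : 0 < c0 by rewrite /c0 addr_gt0 // mulr_gt0.
  by rewrite -mdeg4; apply: deg_bounds; rewrite Vdot_coef lt_eqF // oppr_lt0 mulr_gt0.
have key : forall j, let x := y j 0%R in let z := y j 1%R in
    let a := enorm (y j) in
    [/\ 0 < a, a ^+ 2 = x ^+ 2 + z ^+ 2,
        mu * a ^+ 2 <= c0 * x ^+ 2 + c1 * z ^+ 2 &
        2 * (c0 - c1) * (x ^+ 6 * z) - 2 * c0 * x ^+ 4 - 2 * c1 * z ^+ 4 <= - (mu * a ^+ 4)].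
  move=> j x z a.
  have p0 : 0 < x ^+ 2 + z ^+ 2 by exact: nz_pos.
  have a2 : a ^+ 2 = x ^+ 2 + z ^+ 2 by rewrite /a /enorm sqr_sqrtr // ltW.
  have a0 : 0 < a by rewrite /a /enorm sqrtr_gt0.
  have hxS : x ^+ 2 * (1 + z ^+ 2) <= S.
    have Fge : forall i, 0 <= y i 0%R ^+ 2 * (1 + y i 1%R ^+ 2).
      by move=> i; apply: mulr_ge0; [exact: sqr_ge0|rewrite addr_ge0 // sqr_ge0].
    have := @sum_ge_term _ _ j Fge.
    rewrite /S /x /z; lra.
  have hxz : x ^+ 2 * z <= S.
    apply: le_trans hxS; apply: ler_wpM2l; first exact: sqr_ge0. nra.
  have hk : 2 * eps * (x ^+ 6 * z) <= mu * x ^+ 4.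
    have -> : 2 * eps * (x ^+ 6 * z) = mu * x ^+ 4 * ((x ^+ 2 * z) / S).
      rewrite /eps; field; rewrite gt_eqF //.
    rewrite -[leRHS]mulr1; apply: ler_wpM2l. by rewrite (_ : 4 = 2 * 2)%N // exprM; apply: mulr_ge0; [exact: ltW|exact: sqr_ge0].
      by rewrite ler_pdivrMr // mul1r.
  split => //.
    rewrite a2 /c0 /c1. have hx2 := sqr_ge0 x. have hz2 := sqr_ge0 z. nra.
  have a4 : a ^+ 4 = (x ^+ 2 + z ^+ 2) ^+ 2 by rewrite -a2 -exprM.
  rewrite a4 /c0 /c1.
  have -> : 2 * (2 * mu + eps - 2 * mu) = 2 * eps by ring.
  have hx2 := sqr_ge0 x. have hz2 := sqr_ge0 z.
  have hx4 : 0 <= x ^+ 4 by rewrite (_ : 4 = 2 * 2)%N // exprM sqr_ge0.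
  have hz4 : 0 <= z ^+ 4 by rewrite (_ : 4 = 2 * 2)%N // exprM sqr_ge0.
  have e4 : (x ^+ 2 + z ^+ 2) ^+ 2 = x ^+ 4 + 2 * (x ^+ 2 * z ^+ 2) + z ^+ 4 by ring.
  rewrite e4.
  have hxz2 : 2 * (x ^+ 2 * z ^+ 2) <= x ^+ 4 + z ^+ 4.
    rewrite -subr_ge0.
    have -> : x ^+ 4 + z ^+ 4 - 2 * (x ^+ 2 * z ^+ 2) = (x ^+ 2 - z ^+ 2) ^+ 2 by ring.
    exact: sqr_ge0.
  nra.
exists c0, c1, 0; split.
  by rewrite /c0 /c1 -subr_eq0 addrC addKr gt_eqF.
split=> j; have [a0 a2 hV hVd] := key j; rewrite V_eval Vdot_eval.
  split.
    apply: lt_le_trans hV; apply: mulr_gt0 => //; exact: exprn_gt0.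
  apply: (le_lt_trans hVd); rewrite oppr_lt0; apply: mulr_gt0 => //; exact: exprn_gt0.
split.
  apply: le_trans hV; apply: ler_wpM2l; [exact: ltW|exact: min_pow_le].
apply: (le_trans hVd); rewrite lerN2; apply: ler_wpM2l; [exact: ltW|exact: min_pow_le].
Qed.
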